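(* Let $\mathbb{F}$ be a field of characteristic different from $2$ and $\mathcal{J}Spin_n(\mathbb{F})$ the spin factor. Then every 2-local 1-automorphism of $\mathcal{J}Spin_n(\mathbb{F})$ is an automorphism.
   Context: $\mathcal{J}Spin_n(\mathbb{F})$ is the Jordan algebra with basis $\mathbf{1},s_1,\dots,s_n$ and product determined bilinearly by $\mathbf{1}$ being the identity, $s_is_i=\mathbf{1}$, and $s_is_j=0$ for $i\neq j$. A symmetry is an element $s$ with $s^2=\mathbf{1}$, and $U_s(x)=2s(sx)-x$. A 2-local 1-automorphism is a map $\Delta$ (not assumed linear) such that for every $x,y$ there is a symmetry $s$ with $\Delta(x)=U_s(x)$ and $\Delta(y)=U_s(y)$. *)

(* Defs.v *)
From HB Require Import structures.
From mathcomp Require Import all_boot all_order all_algebra.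
Set Implicit Arguments. Unset Strict Implicit. Unset Printing Implicit Defensive.
Import GRing.Theory.
Local Open Scope ring_scope.

(* The spin factor JSpin_n(F): the F-vector space F*1 (+) F^n, an element
   (a, v) standing for a*1 + sum_i v_i s_i.  *)
Definition jspin (F : fieldType) (n : nat) : Type := (F * 'rV[F]_n)%type.

Section JSpin.
Variables (F : fieldType) (n : nat).

Definition jone : jspin F n := (1, 0).
Definition jadd (x y : jspin F n) : jspin F n := (x.1 + y.1, x.2 + y.2).
Definition jscale (a : F) (x : jspin F n) : jspin F n := (a * x.1, a *: x.2).
Definition jsub (x y : jspin F n) : jspin F n := (x.1 - y.1, x.2 - y.2).

(* Bilinear extension of 1 identity, s_i s_i = 1, s_i s_j = 0 (i <> j):
   (a1 + v)(b1 + w) = (ab + sum_i v_i w_i) 1 + (a w + b v). *)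
Definition jmul (x y : jspin F n) : jspin F n :=
  (x.1 * y.1 + \sum_(i < n) x.2 0 i * y.2 0 i, x.1 *: y.2 + y.1 *: x.2).

Definition jsymmetry (s : jspin F n) : Prop := jmul s s = jone.

Definition jU (s x : jspin F n) : jspin F n :=
  jsub (jscale 2 (jmul s (jmul s x))) x.

Definition jlinear (f : jspin F n -> jspin F n) : Prop :=
  forall (a : F) (x y : jspin F n), f (jadd (jscale a x) y) = jadd (jscale a (f x)) (f y).

Definition jautomorphism (f : jspin F n -> jspin F n) : Prop :=
  [/\ jlinear f, bijective f & forall x y, f (jmul x y) = jmul (f x) (f y)].

Definition two_local_1_automorphism (D : jspin F n -> jspin F n) : Prop :=
  forall x y : jspin F n, exists s : jspin F n,
    [/\ jsymmetry s, D x = jU s x & D y = jU s y].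

End JSpin.

(* Main.v *)
Require Import Defs.
From mathcomp Require Import all_boot all_order all_algebra ring.
Import GRing.Theory.
Local Open Scope ring_scope.

Set Implicit Arguments. Unset Strict Implicit.
Section S.
Variables (F : fieldType) (n : nat).
Definition dot (v w : 'rV[F]_n) := \sum_(i < n) v 0 i * w 0 i.

Lemma dotC v w : dot v w = dot w v.
Proof. by apply: eq_bigr => i _; rewrite mulrC. Qed.
Lemma dotDl u v w : dot (u + v) w = dot u w + dot v w.
Proof. by rewrite /dot -big_split; apply: eq_bigr => i _; rewrite mxE mulrDl. Qed.
Lemma dotZl a v w : dot (a *: v) w = a * dot v w.
Proof. by rewrite /dot mulr_sumr; apply: eq_bigr => i _; rewrite mxE mulrA. Qed.
Lemma dotNl v w : dot (- v) w = - dot v w.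
Proof. by rewrite -scaleN1r dotZl mulN1r. Qed.
Lemma dot0l w : dot 0 w = 0.
Proof. by rewrite /dot big1 // => i _; rewrite mxE mul0r. Qed.
Lemma dotDr u v w : dot w (u + v) = dot w u + dot w v.
Proof. by rewrite !(dotC w) dotDl. Qed.
Lemma dotZr a v w : dot w (a *: v) = a * dot w v.
Proof. by rewrite !(dotC w) dotZl. Qed.
Lemma dotNr v w : dot w (- v) = - dot w v.
Proof. by rewrite !(dotC w) dotNl. Qed.
Lemma dot0r w : dot w 0 = 0.
Proof. by rewrite dotC dot0l. Qed.

Lemma sym_cases (h2 : (2:F) != 0) (s : jspin F n) : jsymmetry s ->
  (forall x, jU s x = x) \/
  (exists v, dot v v = 1 /\ forall x : jspin F n, jU s x = (x.1, (2 * dot v x.2) *: v - x.2)).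
Proof.
case: s => a v; rewrite /jsymmetry /jmul /jone /= -/(dot v v).
case=> h1 h2v.
have : (a + a) *: v = 0 by rewrite scalerDl.
move/eqP; rewrite scaler_eq0 (_ : a + a = 2 * a); last by ring.
rewrite mulf_eq0 (negbTE h2) /=.
case/orP=> /eqP H; subst.
- right; exists v; split; first by move: h1; rewrite mul0r add0r.
  move=> [b w]; rewrite /jU /jsub /jscale /jmul /=.
  rewrite -!/(dot _ _) !(dotDr, dotZr, dot0l, dot0r).
  move: h1; rewrite mul0r add0r => h1.
  congr pair; first by rewrite h1; ring.
  apply/rowP => i; rewrite !mxE; ring.
- left; move=> [b w]; rewrite /jU /jsub /jscale /jmul /=.
  rewrite -!/(dot _ _) !(dotDr, dotZr, dot0l, dot0r).
  move: h1; rewrite dot0l addr0 => h1.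
  congr pair.
    by rewrite !(mulr0, addr0) [a * (a * _)]mulrA h1 mul1r; ring.
  apply/rowP => i; rewrite !mxE !(mulr0, addr0) [a * (a * _)]mulrA h1 mul1r; ring.
Qed.

Lemma jU_props (h2 : (2:F) != 0) (s : jspin F n) : jsymmetry s ->
  [/\ forall x, (jU s x).1 = x.1,
      forall x, (jU s x).2 = (jU s (0, x.2)).2 &
      forall x y, dot (jU s x).2 (jU s y).2 = dot x.2 y.2].
Proof.
move=> /(sym_cases h2) [H|[v [hv H]]].
  by split=> *; rewrite !H.
split=> [x|x|x y]; rewrite !H //=.
rewrite !(dotDl, dotDr, dotNl, dotNr, dotZl, dotZr) hv.
rewrite (dotC x.2 v); ring.
Qed.

Lemma dot_delta w (j : 'I_n) : dot w (delta_mx 0 j) = w 0 j.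
Proof.
rewrite /dot (bigD1 j) //= big1 ?addr0; first by rewrite mxE !eqxx mulr1.
by move=> k kj; rewrite mxE (negbTE kj) andbF mulr0.
Qed.
End S.
Unset Implicit Arguments.

Theorem theorem4p5 (F : fieldType) (n : nat) (hF : (2%N \notin [pchar F]%R))
  (D : jspin F n -> jspin F n) :
  two_local_1_automorphism D -> jautomorphism D.
Proof.
move=> HD.
have h2 : (2:F) != 0.
  by apply: contra hF => h; rewrite inE /= h.
have hA : forall x, (D x).1 = x.1.
  move=> x; have [s [hs -> _]] := HD x x.
  by case: (jU_props h2 hs).
have hB : forall x, (D x).2 = (D (0, x.2)).2.
  move=> x; have [s [hs -> ->]] := HD x (0, x.2).
  by case: (jU_props h2 hs).
have hC : forall x y, dot (D x).2 (D y).2 = dot x.2 y.2.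
  move=> x y; have [s [hs -> ->]] := HD x y.
  by case: (jU_props h2 hs).
pose phi w := (D (0, w)).2.
have hphi : forall u w, dot (phi u) (phi w) = dot u w by move=> u w; exact: hC.
pose P : 'M[F]_n := \matrix_(i, k) phi (delta_mx 0 i) 0 k.
have hPPt : P *m P^T = 1%:M.
  apply/matrixP => i j; rewrite !mxE.
  transitivity (dot (phi (delta_mx 0 i)) (phi (delta_mx 0 j))).
    by apply: eq_bigr => k _; rewrite !mxE.
  by rewrite hphi dot_delta mxE eqxx eq_sym.
have hPtP : P^T *m P = 1%:M by apply: mulmx1C.
have hphiP : forall w, phi w = w *m P.
  move=> w.
  have K : phi w *m P^T = w.
    apply/rowP => j; rewrite !mxE.
    transitivity (dot (phi w) (phi (delta_mx 0 j))).
      by apply: eq_bigr => k _; rewrite !mxE.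
    by rewrite hphi dot_delta.
  by rewrite -[LHS]mulmx1 -hPtP mulmxA K.
have hD : forall x, D x = (x.1, x.2 *m P).
  move=> x; rewrite (surjective_pairing (D x)) hA hB.
  by rewrite -hphiP.
split.
- move=> a x y; rewrite !hD /jadd /jscale /=.
  by rewrite mulmxDl scalemxAl.
- exists (fun x => (x.1, x.2 *m P^T)) => x.
    by rewrite hD /= -mulmxA hPPt mulmx1; case: x.
  by rewrite hD /= -mulmxA hPtP mulmx1; case: x.
- move=> x y; rewrite !hD /jmul /=.
  rewrite -!/(dot _ _) -!hphiP hphi.
  by rewrite !hphiP mulmxDl !scalemxAl.
Qed.
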